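(* Let $\mathbf{x}_1,\ldots,\mathbf{x}_n\in\mathbb{R}^p$ be distinct design points with observed responses $\mathbf{y}=(y_1,\ldots,y_n)^\top$. Let $\boldsymbol{\theta}=(\theta_1,\ldots,\theta_p)$ and $\boldsymbol{\alpha}=(\alpha_1,\ldots,\alpha_p)$ be correlation parameters with $0\le\theta_j$ and $\alpha_j>0$, and define the Gaussian correlation functions $g(\mathbf{h})=\exp(-\sum_{j=1}^p\theta_j h_j^2)$ and $l(\mathbf{h})=\exp(-\sum_{j=1}^p\alpha_j h_j^2)$. Let $\mathbf{G}$ and $\mathbf{L}$ be the $n\times n$ matrices with $(i,j)$ entries $g(\mathbf{x}_i-\mathbf{x}_j)$ and $l(\mathbf{x}_i-\mathbf{x}_j)$, and for $\mathbf{x}\in\mathbb{R}^p$ let $\mathbf{g}(\mathbf{x})=(g(\mathbf{x}-\mathbf{x}_1),\ldots,g(\mathbf{x}-\mathbf{x}_n))^\top$ and $\mathbf{l}(\mathbf{x})=(l(\mathbf{x}-\mathbf{x}_1),\ldots,l(\mathbf{x}-\mathbf{x}_n))^\top$. Let $v:\mathbb{R}^p\to(0,\infty)$ be a given function, $\boldsymbol{\Sigma}=\operatorname{diag}\{v(\mathbf{x}_1),\ldots,v(\mathbf{x}_n)\}$, $\lambda\in[0,1]$, $\mathbf{Q}=\mathbf{G}+\lambda\boldsymbol{\Sigma}^{1/2}\mathbf{L}\boldsymbol{\Sigma}^{1/2}$, $\mathbf{1}$ the all-ones vector in $\mathbb{R}^n$, and $\hat\mu=(\mathbf{1}^\top\mathbf{Q}^{-1}\mathbf{1})^{-1}\mathbf{1}^\top\mathbf{Q}^{-1}\mathbf{y}$.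 Define the single-stage predictor $$\hat y(\mathbf{x})=\hat\mu+\big(\mathbf{g}(\mathbf{x})+\lambda v^{1/2}(\mathbf{x})\boldsymbol{\Sigma}^{1/2}\mathbf{l}(\mathbf{x})\big)^\top\mathbf{Q}^{-1}(\mathbf{y}-\hat\mu\mathbf{1}).$$ Define the global trend $\hat y_{\mathrm{global}}(\mathbf{x})=\hat\mu+\mathbf{g}^\top(\mathbf{x})\mathbf{Q}^{-1}(\mathbf{y}-\hat\mu\mathbf{1})$, the residual vector $\mathbf{s}=\mathbf{y}-(\hat y_{\mathrm{global}}(\mathbf{x}_1),\ldots,\hat y_{\mathrm{global}}(\mathbf{x}_n))^\top$, the standardized residuals $\mathbf{s}^\ast=\boldsymbol{\Sigma}^{-1/2}\mathbf{s}$, and the sequential predictor $$\hat y_{\mathrm{seq}}(\mathbf{x})=\hat y_{\mathrm{global}}(\mathbf{x})+v^{1/2}(\mathbf{x})\,\mathbf{l}^\top(\mathbf{x})\mathbf{L}^{-1}\mathbf{s}^\ast.$$ Then $\hat y(\mathbf{x})=\hat y_{\mathrm{seq}}(\mathbf{x})$ for all $\mathbf{x}\in\mathbb{R}^p$.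
   Context: This is the composite Gaussian process (CGP) predictor with both parameters (the same $\lambda,\boldsymbol{\theta},\boldsymbol{\alpha}$ and volatility function $v$) used in both predictors. Since the design points are distinct, $\mathbf{G}$ and $\mathbf{L}$ are symmetric positive (semi)definite correlation matrices, with $\mathbf{L}$ and $\mathbf{Q}$ invertible, so all inverses above are well defined. $\boldsymbol{\Sigma}^{1/2}$ denotes the diagonal matrix of square roots of the diagonal of $\boldsymbol{\Sigma}$. *)

(* Defs.v *)
From HB Require Import structures.
From mathcomp Require Import all_boot all_order all_algebra.
From mathcomp Require Import all_classical all_reals.
From mathcomp Require Import all_analysis.
Set Implicit Arguments. Unset Strict Implicit. Unset Printing Implicit Defensive.
Import Order.TTheory GRing.Theory Num.Theory.
Local Open Scope ring_scope.

Section CGP.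
Variables (R : realType) (n p : nat).

Definition gauss_corr (th h : 'rV[R]_p) : R :=
  expR (- \sum_(j < p) th 0 j * (h 0 j) ^+ 2).

Definition corr_mx (th : 'rV[R]_p) (X : 'I_n -> 'rV[R]_p) : 'M[R]_n :=
  \matrix_(i, j) gauss_corr th (X i - X j).

Definition corr_vec (th : 'rV[R]_p) (X : 'I_n -> 'rV[R]_p) (x : 'rV[R]_p)
  : 'cV[R]_n := \col_i gauss_corr th (x - X i).

Definition Sig_half (v : 'rV[R]_p -> R) (X : 'I_n -> 'rV[R]_p) : 'M[R]_n :=
  diag_mx (\row_i Num.sqrt (v (X i))).
Definition Sig_invhalf (v : 'rV[R]_p -> R) (X : 'I_n -> 'rV[R]_p) : 'M[R]_n :=
  diag_mx (\row_i (Num.sqrt (v (X i)))^-1).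

Definition ones : 'cV[R]_n := const_mx 1.

Definition Qmx th al v X (lam : R) : 'M[R]_n :=
  corr_mx th X + lam *: (Sig_half v X *m corr_mx al X *m Sig_half v X).

Definition mu_hat th al v X lam (y : 'cV[R]_n) : R :=
  ((ones^T *m invmx (Qmx th al v X lam) *m ones) 0 0)^-1 *
  (ones^T *m invmx (Qmx th al v X lam) *m y) 0 0.

Definition y_hat th al v X lam y (x : 'rV[R]_p) : R :=
  let mu := mu_hat th al v X lam y in
  mu + ((corr_vec th X x + (lam * Num.sqrt (v x)) *: (Sig_half v X *m corr_vec al X x))^T
        *m invmx (Qmx th al v X lam) *m (y - mu *: ones)) 0 0.

Definition y_global th al v X lam y (x : 'rV[R]_p) : R :=
  let mu := mu_hat th al v X lam y in
  mu + ((corr_vec th X x)^T *m invmx (Qmx th al v X lam) *m (y - mu *: ones)) 0 0.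

Definition resid th al v X lam y : 'cV[R]_n :=
  y - \col_i y_global th al v X lam y (X i).
Definition std_resid th al v X lam y : 'cV[R]_n :=
  Sig_invhalf v X *m resid th al v X lam y.

Definition y_seq th al v X lam y (x : 'rV[R]_p) : R :=
  y_global th al v X lam y x +
  Num.sqrt (v x) * ((corr_vec al X x)^T *m invmx (corr_mx al X)
                      *m std_resid th al v X lam y) 0 0.

End CGP.

(* Main.v *)
Require Import Defs.
From HB Require Import structures.
From mathcomp Require Import all_boot all_order all_algebra.
From mathcomp Require Import all_classical all_reals.
From mathcomp Require Import all_analysis.
Import Order.TTheory GRing.Theory Num.Theory.
Local Open Scope ring_scope.

Theorem theorem1 (R : realType) (n p : nat)
  (X : 'I_n -> 'rV[R]_p) (y : 'cV[R]_n)
  (theta alpha : 'rV[R]_p) (v : 'rV[R]_p -> R) (lam : R)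
  (hX : injective X)
  (htheta : forall j, 0 <= theta 0 j)
  (halpha : forall j, 0 < alpha 0 j)
  (hv : forall x, 0 < v x)
  (hlam : 0 <= lam <= 1)
  (hL : corr_mx alpha X \in unitmx)
  (hQ : Qmx theta alpha v X lam \in unitmx) :
  forall x : 'rV[R]_p,
    y_hat theta alpha v X lam y x = y_seq theta alpha v X lam y x.
Proof.
move=> x.
rewrite /y_seq /y_hat /std_resid /resid.
set mu := mu_hat theta alpha v X lam y.
set G := corr_mx theta X; set L := corr_mx alpha X.
set S := Sig_half v X; set Si := Sig_invhalf v X.
set Q := Qmx theta alpha v X lam.
set z := y - mu *: ones R n.
set w := invmx Q *m z.
have hSiS : Si *m S = 1%:M.
  rewrite /Si /S /Sig_invhalf /Sig_half mulmx_diag -diag_const_mx.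
  congr diag_mx; apply/matrixP => i j; rewrite !mxE mulVf //.
  by apply/lt0r_neq0; rewrite sqrtr_gt0.
have hcol : \col_i y_global theta alpha v X lam y (X i) = mu *: ones R n + G *m w.
  apply/matrixP => i j; rewrite !mxE /y_global -/mu -/Q -/z -mulmxA -/w.
  rewrite /ones !mxE mulr1 [j]ord1; congr (_ + _).
  apply: eq_bigr => k _; rewrite !mxE.
  done.
have hz : z = Q *m w by rewrite /w mulmxA mulmxV // mul1mx.
have hres : y - (mu *: ones R n + G *m w) = lam *: (S *m (L *m (S *m w))).
  rewrite opprD addrA -/z hz -mulmxBl /Q /Qmx -/G -/L -/S addrC addKr.
  by rewrite -scalemxAl -!mulmxA.

rewrite hcol hres /y_global -/mu -/Q -/z -/G.
have hk : invmx L *m (Si *m (lam *: (S *m (L *m (S *m w))))) = lam *: (S *m w).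
  rewrite -!scalemxAr (mulmxA Si S) hSiS mul1mx (mulmxA (invmx L)).
  by rewrite mulVmx // mul1mx.
rewrite -[_ *m invmx L *m _]mulmxA hk.
rewrite -addrA; congr (_ + _).

rewrite [(_ + _)^T]linearD /= !mulmxDl mxE; congr (_ + _).
rewrite [(_ *: _)^T]linearZ /= trmx_mul /S tr_diag_mx -/S.
rewrite -!scalemxAl -!mulmxA -/w -scalemxAr.
rewrite [in LHS]mxE [in RHS]mxE mulrA; congr (_ * _).
by rewrite mulrC.
Qed.
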